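(* Let $A$ be such that $\mathfrak{g}=\mathfrak{g}(A)$ is finite dimensional and fix $i\in\{1,\dots,\theta\}$. If $\beta\in\varDelta^A_{+,j}$ for some $j\in\{1,\dots,p\}$ (i.e. $\beta$ is an $\alpha_i$-string generator), then $M_\beta$ is contained in the Lie subalgebra (in $\mathsf{Rep}(\boldsymbol\alpha_p)$) of $(\mathfrak{g}',e_i)$ generated by the submodules $M_{\alpha_k}$, $k\neq i$.
   Context: $\Bbbk$ algebraically closed of characteristic $p>0$; $A=(a_{jk})\in\Bbbk^{\theta\times\theta}$ with $a_{jj}\in\{0,2\}$ and $a_{jk}=0$ iff $a_{kj}=0$ ($j\ne k$). $\mathfrak{g}(A)$ is the contragredient Lie algebra generated by a Cartan subalgebra $\mathfrak{h}$ (with $\xi_k\in\mathfrak{h}^*$, $h_j\in\mathfrak{h}$, $\xi_k(h_j)=a_{jk}$) and $e_j,f_j$ subject to $[h,h']=0$, $[h,e_j]=\xi_j(h)e_j$, $[h,f_j]=-\xi_j(h)f_j$, $[e_j,f_k]=\delta_{jk}h_j$, modulo the largest graded ideal meeting $\mathfrak{h}$ trivially; $\mathbb{Z}^\theta$-graded with $\deg e_j=\alpha_j$. $\varDelta^A_+=\{\beta\in\mathbb{N}_0^\theta\setminus0:\mathfrak{g}_\beta\neq0\}$; in the finite-dimensional case each root space is one-dimensional, spanned by a fixed $e_\beta$. $\mathfrak{g}'=[\mathfrak{g},\mathfrak{g}]$, and $(\mathfrak{g}',e_i)$ denotes $\mathfrak{g}'$ as a Lie algebra in $\mathsf{Rep}(\boldsymbol\alpha_p)$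 (modules over $\Bbbk[t]/(t^p)$, $t$ primitive) with $t$ acting by $\operatorname{ad}e_i$. For $j\in\{1,\dots,p\}$, $\varDelta^A_{+,j}$ is the set of $\beta\ne\alpha_i$ with $\beta+k\alpha_i\in\varDelta^A_+$ for $0\le k<j$ and $\beta-\alpha_i,\beta+j\alpha_i\notin\varDelta^A_+$; for such $\beta$, $M_\beta=\bigoplus_{k=0}^{j-1}\Bbbk e_{\beta+k\alpha_i}$ (an $\operatorname{ad}e_i$-stable subspace). For $k\ne i$, $\alpha_k$ lies in some $\varDelta^A_{+,j}$. *)

(* Defs.v *)
From HB Require Import structures.
From mathcomp Require Import all_boot all_order all_algebra.
Set Implicit Arguments. Unset Strict Implicit. Unset Printing Implicit Defensive.
Import GRing.Theory.
Local Open Scope ring_scope.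

Section LieDefs.
Variables (K : fieldType) (L : vectType K) (br : L -> L -> L).

Definition lie_bracket : Prop :=
  [/\ forall a x y z, br (a *: x + y) z = a *: br x z + br y z,
      forall a x y z, br z (a *: x + y) = a *: br z x + br z y,
      forall x, br x x = 0 &
      forall x y z, br x (br y z) + br y (br z x) + br z (br x y) = 0].

Definition bracket_sub (U V W : {vspace L}) : Prop :=
  forall u v, u \in U -> v \in V -> br u v \in W.

Definition subalgebra (U : {vspace L}) : Prop := bracket_sub U U U.
Definition lie_ideal (I : {vspace L}) : Prop := bracket_sub fullv I I.

(** g' = [g, g] : the span of all brackets (= span of brackets of basis vectors) *)
Definition derived : {vspace L} :=
  <<[seq br u v | u <- (vbasis fullv : seq L), v <- (vbasis fullv : seq L)]>>%VS.

Variable theta : nat.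

Definition alpha (k : 'I_theta) : 'rV[int]_theta := delta_mx 0 k.

Definition Zgrading (gr : 'rV[int]_theta -> {vspace L}) : Prop :=
  exists S : seq 'rV[int]_theta,
    [/\ uniq S, forall a, a \notin S -> gr a = 0%VS,
        directv (\sum_(a <- S) gr a), (\sum_(a <- S) gr a)%VS = fullv &
        forall a b, bracket_sub (gr a) (gr b) (gr (a + b))].

Definition graded_subspace (gr : 'rV[int]_theta -> {vspace L}) (I : {vspace L}) :=
  exists S : seq 'rV[int]_theta, (I <= \sum_(a <- S) (I :&: gr a))%VS.

(** (L, br, h, e, f, hc, xi, gr) is (a model of) the contragredient Lie
    algebra g(A) with its Z^theta-grading, built on a realization of A. *)
Definition is_contragredient (A : 'M[K]_theta) (h : {vspace L})
  (e f hc : 'I_theta -> L) (xi : 'I_theta -> L -> K)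
  (gr : 'rV[int]_theta -> {vspace L}) : Prop :=
  [/\ lie_bracket,
      (* realization of A *)
      [/\ forall k a x y, xi k (a *: x + y) = a * xi k x + xi k y,
          (forall j, hc j \in h) /\
          forall j k, xi k (hc j) = A j k,
          \dim h = (2 * theta - \rank A)%N,
          (forall c : 'I_theta -> K,
              (forall x, x \in h -> \sum_k c k * xi k x = 0) -> forall k, c k = 0) &
          (forall c : 'I_theta -> K,
              \sum_k c k *: hc k = 0 -> forall k, c k = 0)],
      [/\ forall x y, x \in h -> y \in h -> br x y = 0,
          forall j x, x \in h -> br x (e j) = xi j x *: e j,
          forall j x, x \in h -> br x (f j) = - (xi j x *: f j) &
          forall j k, br (e j) (f k) = if j == k then hc j else 0],
      (forall U : {vspace L}, subalgebra U -> (h <= U)%VS ->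
          (forall j, e j \in U /\ f j \in U) -> U = fullv) /\
      [/\ Zgrading gr, (h <= gr 0%R)%VS,
          forall j, e j \in gr (alpha j) &
          forall j, f j \in gr (- alpha j)] &
      (* quotient by the largest graded ideal meeting h trivially *)
      (forall I : {vspace L}, lie_ideal I -> graded_subspace gr I ->
          (I :&: h = 0)%VS -> I = 0%VS)].

Variable gr : 'rV[int]_theta -> {vspace L}.

Definition pos_root (b : 'rV[int]_theta) : Prop :=
  [/\ forall k, 0 <= b 0 k, b != 0 & gr b != 0%VS].

Definition string_gen (i : 'I_theta) (j : nat) (b : 'rV[int]_theta) : Prop :=
  [/\ b != alpha i,
      forall k, (k < j)%N -> pos_root (b + alpha i *+ k),
      ~ pos_root (b - alpha i) &
      ~ pos_root (b + alpha i *+ j)].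

Definition Mstring (i : 'I_theta) (j : nat) (b : 'rV[int]_theta) : {vspace L} :=
  (\sum_(k < j) gr (b + alpha i *+ k)%R)%VS.

(** Lie subalgebra in Rep(alpha_p) of (g', e_i): a subspace of g' closed
    under the bracket and stable under t = ad e_i. *)
Definition rep_subalgebra (i : 'I_theta) (e : 'I_theta -> L) (U : {vspace L}) :=
  [/\ (U <= derived)%VS, subalgebra U & forall u, u \in U -> br (e i) u \in U].

(** V lies in the Lie subalgebra (in Rep(alpha_p)) of (g', e_i) generated by
    the submodules M_{alpha_k}, k <> i, i.e. in every such subalgebra that
    contains them. *)
Definition in_generated_subalgebra (p : nat) (i : 'I_theta) (e : 'I_theta -> L)
  (V : {vspace L}) : Prop :=
  forall U : {vspace L}, rep_subalgebra i e U ->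
    (forall (k : 'I_theta) (l : nat), k != i -> (1 <= l <= p)%N ->
        string_gen i l (alpha k) -> (Mstring i l (alpha k) <= U)%VS) ->
    (V <= U)%VS.

End LieDefs.

(* Main.v *)
Require Import Defs.
From HB Require Import structures.
From mathcomp Require Import all_boot all_order all_algebra.
From mathcomp Require Import zify ring.
Import GRing.Theory.
Local Open Scope ring_scope.

Module Aux.
Set Implicit Arguments. Unset Strict Implicit. Unset Printing Implicit Defensive.
Import GRing.Theory Num.Theory Order.TTheory.

Section Basic.
Variables (K : fieldType) (L : vectType K) (br : L -> L -> L).
Hypothesis Hl : lie_bracket br.

Lemma brLl a x y z : br (a *: x + y) z = a *: br x z + br y z.
Proof. by case: Hl. Qed.
Lemma brLr a x y z : br z (a *: x + y) = a *: br z x + br z y.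
Proof. by case: Hl. Qed.
Lemma brxx x : br x x = 0. Proof. by case: Hl. Qed.
Lemma jacobi0 x y z : br x (br y z) + br y (br z x) + br z (br x y) = 0.
Proof. by case: Hl. Qed.

Lemma br0l z : br 0 z = 0.
Proof.
have := brLl 1 0 0 z; rewrite !scale1r addr0.
by move=> H; apply: (@addrI _ (br 0 z)); rewrite addr0 -H.
Qed.
Lemma br0r z : br z 0 = 0.
Proof.
have := brLr 1 0 0 z; rewrite !scale1r addr0.
by move=> H; apply: (@addrI _ (br z 0)); rewrite addr0 -H.
Qed.
Lemma brDl x y z : br (x + y) z = br x z + br y z.
Proof. by have := brLl 1 x y z; rewrite !scale1r. Qed.
Lemma brDr x y z : br z (x + y) = br z x + br z y.
Proof. by have := brLr 1 x y z; rewrite !scale1r. Qed.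
Lemma brZl a x z : br (a *: x) z = a *: br x z.
Proof. by have := brLl a x 0 z; rewrite br0l !addr0. Qed.
Lemma brZr a x z : br z (a *: x) = a *: br z x.
Proof. by have := brLr a x 0 z; rewrite br0r !addr0. Qed.
Lemma brNl x z : br (- x) z = - br x z.
Proof. by rewrite -scaleN1r brZl scaleN1r. Qed.
Lemma brNr x z : br z (- x) = - br z x.
Proof. by rewrite -scaleN1r brZr scaleN1r. Qed.
Lemma brC x y : br x y = - br y x.
Proof.
have := brxx (x + y); rewrite brDl !brDr !brxx add0r addr0 => /eqP.
by rewrite addr_eq0 => /eqP.
Qed.
Lemma jacobi x y z : br x (br y z) = br (br x y) z + br y (br x z).
Proof.
have := jacobi0 x y z => /eqP; rewrite -addrA addr_eq0 => /eqP ->.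
by rewrite opprD (brC z x) brNr opprK (brC z (br x y)) opprK addrC.
Qed.

Lemma span_ind (P : L -> Prop) (s : seq L) :
  P 0 -> (forall a x y, P x -> P y -> P (a *: x + y)) ->
  (forall x, x \in s -> P x) -> forall y, y \in <<s>>%VS -> P y.
Proof.
move=> P0 PL Ps y /(coord_span (X := in_tuple s)) ->.
elim/big_rec: _ => // t acc _ Pacc; apply: PL => //; apply: Ps.
by rewrite mem_nth // size_tuple.
Qed.

Definition is_closure (I : finType) (g : I -> L) (X : seq L) (C : {vspace L}) :=
  [/\ forall x, x \in X -> x \in C,
      forall j y, y \in C -> br (g j) y \in C &
      forall P : L -> Prop, P 0 -> (forall a x y, P x -> P y -> P (a *: x + y)) ->
        (forall x, x \in X -> P x) -> (forall j y, P y -> P (br (g j) y)) ->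
        forall y, y \in C -> P y].

Section Closure.
Variables (I : finType) (g : I -> L) (X : seq L).
Definition cstep (s : seq L) := s ++ flatten [seq [seq br (g j) w | w <- s] | j <- enum I].
Definition citer n := iter n cstep X.

Lemma citer_ind (P : L -> Prop) :
  P 0 -> (forall a x y, P x -> P y -> P (a *: x + y)) ->
  (forall x, x \in X -> P x) -> (forall j y, P y -> P (br (g j) y)) ->
  forall n y, y \in <<citer n>>%VS -> P y.
Proof.
move=> P0 PL PX Pg n; apply: span_ind => //.
elim: n => [|n IH] x; first exact: PX.
rewrite [citer n.+1]/citer iterS -/(citer n) /cstep mem_cat => /orP[/IH//|].
case/flatten_mapP => j _ /mapP[w /IH Pw ->]; exact: Pg.
Qed.

Lemma citer_sub n : (<<citer n>> <= <<citer n.+1>>)%VS.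
Proof. by apply/span_subvP => x xs; apply: memv_span; rewrite [citer n.+1]/citer iterS -/(citer n) /cstep mem_cat xs. Qed.

Lemma citer_br n j y : y \in <<citer n>>%VS -> br (g j) y \in <<citer n.+1>>%VS.
Proof.
move: y; apply: (span_ind (P := fun y => br (g j) y \in <<citer n.+1>>%VS)).
- by rewrite br0r mem0v.
- by move=> a x y Hx Hy; rewrite brLr memvD // memvZ.
move=> x xs; apply: memv_span; rewrite [citer n.+1]/citer iterS -/(citer n) /cstep mem_cat; apply/orP; right.
by apply/flatten_mapP; exists j; rewrite ?mem_enum //; apply/mapP; exists x.
Qed.

Lemma citer_stable n : (<<citer n.+1>> <= <<citer n>>)%VS ->
  forall m, (<<citer (m + n)>> = <<citer n>>)%VS.
Proof.
move=> Hn; elim=> [//|m IH].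
apply/eqP; rewrite eqEsubv; apply/andP; split; last first.
  by rewrite -IH; apply: citer_sub.
rewrite addSn; apply/span_subvP => x; rewrite [citer (m + n).+1]/citer iterS -/(citer (m + n)) {1}/cstep mem_cat => /orP[xs|].
  by rewrite -IH; apply: memv_span.
case/flatten_mapP => j _ /mapP[w ws ->].
apply: (subvP Hn); apply: citer_br; rewrite -IH; exact: memv_span.
Qed.

Lemma closure_ex : exists C, is_closure g X C.
Proof.
pose D := \dim (fullv : {vspace L}).
have [/existsP[n Hn]|Hno] := boolP [exists n : 'I_D.+1, (<<citer n.+1>> <= <<citer n>>)%VS].
  exists <<citer n>>%VS; split.
  - move=> x xX; have : (<<citer 0>> <= <<citer n>>)%VS.
      elim: (nat_of_ord n) => [|m IH]; first exact: subvv.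
      exact: subv_trans IH (citer_sub m).
    by move/subvP; apply; apply: memv_span.
  - move=> j y yC; have := citer_br j yC.
    by have := citer_stable Hn 1 => /= ->.
  - by move=> P P0 PL PX Pg y; apply: citer_ind.
exfalso; rewrite negb_exists in Hno; move/forallP: Hno => Hno.
have key : forall m, (m <= D.+1)%N -> (m <= \dim <<citer m>>)%N.
  elim=> [//|m IH] lm; have lm' : (m < D.+1)%N by [].
  have ns := Hno (Ordinal lm').
  have [le eqv] := dimv_leqif_sup (citer_sub m).
  have lt : (\dim <<citer m>> < \dim <<citer m.+1>>)%N by rewrite ltn_neqAle le andbT eqv.
  exact: leq_ltn_trans (IH (ltnW lm)) lt.
have := key D.+1 (leqnn _); have := dimvS (subvf <<citer D.+1>>%VS).
by rewrite -/D => a b; have := leq_trans b a; rewrite ltnn.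
Qed.
End Closure.
End Basic.


Section Grad.
Variables (K : fieldType) (L : vectType K) (br : L -> L -> L) (theta : nat).
Variables (gr : 'rV[int]_theta -> {vspace L}) (S : seq 'rV[int]_theta).
Local Notation deg := 'rV[int]_theta.
Hypothesis HSu : uniq S.
Hypothesis HS0 : forall a, a \notin S -> gr a = 0%VS.
Hypothesis HSd : directv (\sum_(a <- S) gr a).

Definition G (P : pred deg) := (\sum_(a <- S | P a) gr a)%VS.

Lemma sumF_ind (F : deg -> {vspace L}) (S' : seq deg) (P : pred deg) (Q : L -> Prop) :
  Q 0 -> (forall u v, Q u -> Q v -> Q (u + v)) -> (forall a u, P a -> u \in F a -> Q u) ->
  forall y, y \in (\sum_(a <- S' | P a) F a)%VS -> Q y.
Proof.
move=> Q0 QD QF; elim: S' => [|a S' IH] y.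
  by rewrite big_nil memv0 => /eqP ->.
rewrite big_cons; case: ifP => Pa; last exact: IH.
by case/memv_addP => u Hu [v Hv ->]; apply: QD; [exact: QF Hu| exact: IH].
Qed.

Lemma sumF_sup (F : deg -> {vspace L}) (P : pred deg) a :
  a \in S -> P a -> (F a <= \sum_(b <- S | P b) F b)%VS.
Proof.
move=> aS Pa; rewrite -big_filter (bigD1_seq a) ?filter_uniq ?mem_filter ?Pa //=.
exact: addvSl.
Qed.

Lemma gr_sub_G (P : pred deg) a : P a -> (gr a <= G P)%VS.
Proof.
move=> Pa; have [aS|naS] := boolP (a \in S); first exact: sumF_sup.
by rewrite HS0 // sub0v.
Qed.

Lemma mem_G (P : pred deg) a u : P a -> u \in gr a -> u \in G P.
Proof. by move=> Pa; apply: (subvP (gr_sub_G Pa)). Qed.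

Lemma G_sub (P Q : pred deg) : (forall a, P a -> Q a) -> (G P <= G Q)%VS.
Proof.
move=> PQ; apply/subvP => y; apply: (@sumF_ind gr S P (fun y => y \in G Q)); first exact: mem0v.
  by move=> u v; apply: memvD.
by move=> a u Pa; apply: mem_G; apply: PQ.
Qed.

Lemma G_capC (P : pred deg) : (G P :&: G (predC P) = 0)%VS.
Proof.
have Hd : \dim (\sum_(a <- S) gr a) = (\sum_(a <- S) \dim (gr a))%N.
  by apply/eqP; move: HSd; rewrite directvE.
have e1 : (\dim (G P) <= \sum_(a <- S | P a) \dim (gr a))%N.
  exact: (dimv_sum_leqif _).1.
have e2 : (\dim (G (predC P)) <= \sum_(a <- S | predC P a) \dim (gr a))%N.
  exact: (dimv_sum_leqif _).1.
rewrite (bigID P) /= [X in _ = X](bigID P) /= in Hd.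
have := dimv_sum_cap (G P) (G (predC P)).
rewrite /G /= Hd; move: e1 e2; rewrite /G /= => e1 e2 e3.
apply/eqP; rewrite -dimv_eq0; apply/eqP; lia.
Qed.

Lemma G_sep (P Q : pred deg) y : (forall a, P a -> Q a -> False) ->
  y \in G P -> y \in G Q -> y = 0.
Proof.
move=> PQ yP yQ; apply/eqP; rewrite -memv0 -(G_capC P) memv_cap yP /=.
apply: (subvP (G_sub (Q := predC P) _)) yQ => a Qa /=; apply/negP => Pa; exact: PQ Pa Qa.
Qed.
End Grad.


Section Deg.
Variable n : nat.
Local Notation deg := 'rV[int]_n.
Definition posd (d : deg) := [forall t, 0 <= d 0 t] && (d != 0).
Definition negd (d : deg) := [forall t, d 0 t <= 0] && (d != 0).

Lemma alphaE (j t : 'I_n) : alpha j 0 t = (t == j)%:R.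
Proof. by rewrite /alpha mxE eqxx. Qed.
Lemma addE (a b : deg) t : (a + b) 0 t = a 0 t + b 0 t. Proof. by rewrite mxE. Qed.
Lemma oppE (a : deg) t : (- a) 0 t = - a 0 t. Proof. by rewrite mxE. Qed.
Lemma subE (a b : deg) t : (a - b) 0 t = a 0 t - b 0 t. Proof. by rewrite !mxE. Qed.
Lemma muln_E (a : deg) m t : (a *+ m) 0 t = a 0 t *+ m.
Proof. by elim: m => [|m IH]; rewrite ?mulr0n ?mxE // !mulrS addE IH. Qed.

Lemma nz_entry (d : deg) t : d 0 t != 0 -> d != 0.
Proof. by apply: contraNneq => ->; rewrite mxE. Qed.

Lemma eq_entries (a b : deg) : (forall t, a 0 t = b 0 t) -> a = b.
Proof. by move=> H; apply/matrixP => r t; rewrite ord1 H. Qed.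

Lemma posd_alpha j : posd (alpha j).
Proof.
apply/andP; split; first by apply/forallP => t; rewrite alphaE; case: eqP.
by apply: (@nz_entry _ j); rewrite alphaE eqxx.
Qed.
Lemma posd_add j (d : deg) : posd d -> posd (alpha j + d).
Proof.
case/andP => /forallP Hd _; apply/andP; split.
  apply/forallP => t; rewrite addE alphaE; apply: addr_ge0 => //; by case: eqP.
apply: (@nz_entry _ j); rewrite addE alphaE eqxx; have := Hd j; lia.
Qed.
Lemma negd_alpha j : negd (- alpha j).
Proof.
apply/andP; split; first by apply/forallP => t; rewrite oppE alphaE; case: eqP.
by apply: (@nz_entry _ j); rewrite oppE alphaE eqxx.
Qed.
Lemma negd_add j (d : deg) : negd d -> negd (- alpha j + d).
Proof.
case/andP => /forallP Hd _; apply/andP; split.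
  apply/forallP => t; rewrite addE oppE alphaE; have := Hd t; case: eqP => _; lia.
apply: (@nz_entry _ j); rewrite addE oppE alphaE eqxx; have := Hd j; lia.
Qed.
Lemma posd_negd (d : deg) : posd d -> negd d -> False.
Proof.
case/andP => /forallP H1 dn0 /andP[/forallP H2 _]; move/negP: dn0; apply.
apply/eqP/eq_entries => t; rewrite mxE; have := H1 t; have := H2 t; lia.
Qed.
Lemma posd0 : ~~ posd 0. Proof. by rewrite /posd eqxx andbF. Qed.

Lemma pos'_alpha i j : j != i -> alpha j != alpha i :> deg.
Proof.
move=> ji; apply/negP => /eqP/(congr1 (fun m : deg => m 0 j)).
by rewrite !alphaE eqxx (negPf ji).
Qed.
Lemma pos'_add i j (d : deg) : posd d -> d != alpha i -> alpha j + d != alpha i.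
Proof.
case/andP => /forallP Hd dn0 _; have [->|ji] := eqVneq j i.
  by apply: contra dn0 => /eqP H; apply/eqP; apply: (@addrI _ (alpha i)); rewrite addr0.
apply/negP => /eqP/(congr1 (fun m : deg => m 0 j)); rewrite addE !alphaE eqxx (negPf ji).
have := Hd j; lia.
Qed.

Section KI.
Variables (k i : 'I_n).
Hypothesis ki : k != i.
Definition isK (d : deg) := (d 0 k == 1) && [forall t, ((t != k) && (t != i)) ==> (d 0 t == 0)].
Definition isI (d : deg) := [forall t, (t != i) ==> (d 0 t == 0)].
Definition Qd (d : deg) := [&& posd d, ~~ isK d & ~~ isI d].

Lemma kmE m t : (alpha k + alpha i *+ m) 0 t = (t == k)%:R + (t == i)%:R *+ m.
Proof. by rewrite addE muln_E !alphaE. Qed.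

Lemma posd_km m : posd (alpha k + alpha i *+ m).
Proof.
apply/andP; split.
  apply/forallP => t; rewrite kmE; apply: addr_ge0; first by case: eqP.
  by apply: mulrn_wge0; case: eqP.
by apply: (@nz_entry _ k); rewrite kmE eqxx (negPf ki) mul0rn addr0.
Qed.

Lemma notK_entry (d : deg) t : t != k -> t != i -> d 0 t != 0 -> ~~ isK d.
Proof.
move=> tk ti dt; apply/negP => /andP[_ /forallP/(_ t)]; rewrite tk ti /= => /eqP.
by move/eqP: dt.
Qed.
Lemma notI_entry (d : deg) t : t != i -> d 0 t != 0 -> ~~ isI d.
Proof. by move=> ti dt; apply/negP => /forallP/(_ t); rewrite ti /= (negPf dt). Qed.

Lemma Qd_alpha j : j != i -> j != k -> Qd (alpha j).
Proof.
move=> ji jk; rewrite /Qd posd_alpha /=; apply/andP; split.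
  by apply: (@notK_entry _ j) => //; rewrite alphaE eqxx.
by apply: (@notI_entry _ j) => //; rewrite alphaE eqxx.
Qed.

Lemma Qd_ji j : j != i -> j != k -> Qd (alpha j + alpha i).
Proof.
move=> ji jk; rewrite /Qd posd_add ?posd_alpha //=; apply/andP; split.
  by apply: (@notK_entry _ j) => //; rewrite addE !alphaE eqxx (negPf ji) addr0.
by apply: (@notI_entry _ j) => //; rewrite addE !alphaE eqxx (negPf ji) addr0.
Qed.

Lemma Qd_jkm j m : j != i -> Qd (alpha j + (alpha k + alpha i *+ m)).
Proof.
move=> ji; rewrite /Qd posd_add ?posd_km //=; apply/andP; split.
  have [->|jk] := eqVneq j k.
    by apply/negP => /andP[/eqP + _]; rewrite addE kmE alphaE eqxx (negPf ki) mul0rn.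
  by apply: (@notK_entry _ j) => //; rewrite addE kmE alphaE eqxx (negPf ji) (negPf jk) mul0rn.
apply: (@notI_entry _ k) => //; rewrite addE kmE alphaE eqxx (negPf ki) mul0rn.
by case: (k == j).
Qed.

Lemma Qd_add j (d : deg) : Qd d -> Qd (alpha j + d).
Proof.
case/and3P => pd nK nI; have /andP[/forallP Hd _] := pd.
rewrite /Qd posd_add //=; apply/andP; split.
  apply/negP => /andP[/eqP Hk /forallP Ht].
  have [ji|ji] := eqVneq j i.
    move/negP: nK; apply; apply/andP; split.
      by move: Hk; rewrite addE alphaE ji (negPf ki) add0r => ->.
    apply/forallP => t; apply/implyP => /andP[tk ti]; move: (Ht t); rewrite tk ti /=.
    by rewrite addE alphaE ji (negPf ti) add0r.
  have [jk|jk] := eqVneq j k.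
    move/negP: nI; apply; apply/forallP => t; apply/implyP => ti.
    have [tk|tk] := eqVneq t k.
      by move: Hk; rewrite addE alphaE jk tk eqxx /= mulr1n => H; apply/eqP; lia.
    by move: (Ht t); rewrite tk ti /= addE alphaE jk (negPf tk) add0r.
  move: (Ht j); rewrite jk ji /= addE alphaE eqxx; have := Hd j; lia.
apply/negP => /forallP Ht.
have [ji|ji] := eqVneq j i.
  move/negP: nI; apply; apply/forallP => t; apply/implyP => ti; move: (Ht t).
  by rewrite ti /= addE alphaE ji (negPf ti) add0r.
move: (Ht j); rewrite ji /= addE alphaE eqxx; have := Hd j; lia.
Qed.
End KI.
End Deg.


Section Main.
Variables (K : fieldType) (theta : nat) (A : 'M[K]_theta) (L : vectType K).
Variables (br : L -> L -> L) (h : {vspace L}) (e f hc : 'I_theta -> L).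
Variables (xi : 'I_theta -> L -> K) (gr : 'rV[int]_theta -> {vspace L}).
Variables (S : seq 'rV[int]_theta).
Local Notation deg := 'rV[int]_theta.
Hypothesis Hl : lie_bracket br.
Hypothesis Hhc : forall j, hc j \in h.
Hypothesis HxiA : forall j k, xi k (hc j) = A j k.
Hypothesis Hind : forall c : 'I_theta -> K, \sum_k c k *: hc k = 0 -> forall k, c k = 0.
Hypothesis Hhh : forall x y, x \in h -> y \in h -> br x y = 0.
Hypothesis Hhe : forall j x, x \in h -> br x (e j) = xi j x *: e j.
Hypothesis Hhf : forall j x, x \in h -> br x (f j) = - (xi j x *: f j).
Hypothesis Hef : forall j k, br (e j) (f k) = if j == k then hc j else 0.
Hypothesis Hgen : forall U : {vspace L}, subalgebra br U -> (h <= U)%VS ->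
          (forall j, e j \in U /\ f j \in U) -> U = fullv.
Hypothesis HSu : uniq S.
Hypothesis HS0 : forall a, a \notin S -> gr a = 0%VS.
Hypothesis HSd : directv (\sum_(a <- S) gr a).
Hypothesis HSb : forall a b, bracket_sub br (gr a) (gr b) (gr (a + b)).
Hypothesis Hh0 : (h <= gr 0)%VS.
Hypothesis Hegr : forall j, e j \in gr (alpha j).
Hypothesis Hfgr : forall j, f j \in gr (- alpha j).
Hypothesis Hquot : forall I : {vspace L}, lie_ideal br I -> graded_subspace gr I ->
          (I :&: h = 0)%VS -> I = 0%VS.

Local Notation G := (G gr S).

Lemma cl_sub (g : 'I_theta -> L) X C (W : {vspace L}) : is_closure br g X C ->
  (forall x, x \in X -> x \in W) -> (forall j w, w \in W -> br (g j) w \in W) ->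
  (C <= W)%VS.
Proof.
move=> [_ _ Cind] XW gW; apply/subvP => y; apply: (Cind (fun y => y \in W)) => //.
- exact: mem0v.
- by move=> a x z xW zW; rewrite memvD // memvZ.
Qed.

Lemma cl_h (g : 'I_theta -> L) X C : is_closure br g X C ->
  (forall z j, z \in h -> exists c, br z (g j) = c *: g j) ->
  (forall z x, z \in h -> x \in X -> br z x \in C) ->
  forall z y, z \in h -> y \in C -> br z y \in C.
Proof.
move=> [CX Cg Cind] Hg HX z y zh yC.
suff: y \in C /\ br z y \in C by case.
move: y yC; apply: (Cind (fun y => y \in C /\ br z y \in C)).
- by rewrite mem0v br0r // mem0v.

- move=> a x w [xC zx] [wC zw]; rewrite brLr // !memvD ?memvZ //.
- by move=> x xX; rewrite CX // HX.
move=> j w [wC zw]; rewrite Cg //; split=> //.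
rewrite jacobi //; have [c ->] := Hg z j zh; rewrite brZl // memvD ?memvZ ?Cg //.
Qed.

Lemma cl_opp (g g' : 'I_theta -> L) X C (W : {vspace L}) : is_closure br g X C ->
  (forall z y, z \in h -> y \in C -> br z y \in C) ->
  (forall j k, br (g' j) (g k) \in h) ->
  (C <= W)%VS -> (forall k w, w \in W -> br (g k) w \in W) ->
  (forall j x, x \in X -> br (g' j) x \in W) ->
  forall j y, y \in C -> br (g' j) y \in W.
Proof.
move=> [CX Cg Cind] hC gh CW gW XW j y yC.
suff: y \in C /\ forall j, br (g' j) y \in W by case=> _; apply.
move: y yC; apply: (Cind (fun y => y \in C /\ forall j, br (g' j) y \in W)).
- by split; rewrite ?mem0v // => j'; rewrite br0r // mem0v.
- move=> a x w [xC zx] [wC zw]; split; first by rewrite memvD ?memvZ.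
  by move=> j'; rewrite brLr // !memvD ?memvZ.
- by move=> x xX; rewrite CX //; split=> // j'; apply: XW.
move=> k w [wC zw]; rewrite Cg //; split=> // j'.
rewrite jacobi // memvD //; first by apply: (subvP CW); apply: hC.
exact: gW.
Qed.

Lemma cl_norm (g : 'I_theta -> L) X C (W : {vspace L}) : is_closure br g X C ->
  (forall x v, x \in X -> v \in W -> br x v \in W) ->
  (forall j v, v \in W -> br (g j) v \in W) ->
  forall c v, c \in C -> v \in W -> br c v \in W.
Proof.
move=> [CX Cg Cind] XW gW c v cC.
move: v; move: c cC; apply: (Cind (fun c => forall v, v \in W -> br c v \in W)).
- by move=> v' _; rewrite br0l // mem0v.
- by move=> a x w Hx Hw v' v'W; rewrite brLl // memvD ?memvZ ?Hx ?Hw.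
- by move=> x xX v' v'W; apply: XW.
move=> j w Hw v' v'W.
have := jacobi Hl (g j) w v' => /(congr1 (fun t => t - br w (br (g j) v'))).
rewrite addrK => <-; rewrite memvB //; first by apply: gW; apply: Hw.
by apply: Hw; apply: gW.
Qed.

Lemma inl_add (U V : {vspace L}) x : x \in U -> x \in (U + V)%VS.
Proof. exact: (subvP (addvSl U V)). Qed.
Lemma inr_add (U V : {vspace L}) x : x \in V -> x \in (U + V)%VS.
Proof. exact: (subvP (addvSr U V)). Qed.

Definition es := [seq e j | j <- enum 'I_theta].
Definition fs := [seq f j | j <- enum 'I_theta].

Lemma mem_fam (g : 'I_theta -> L) x : x \in [seq g j | j <- enum 'I_theta] -> exists j, x = g j.
Proof. by case/mapP => j _ ->; exists j. Qed.
Lemma fam_mem (g : 'I_theta -> L) j : g j \in [seq g j | j <- enum 'I_theta].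
Proof. by rewrite (map_f g) ?mem_enum. Qed.

Lemma fe_h j k : br (f j) (e k) \in h.
Proof. rewrite brC // Hef memvN; case: eqP => _; [exact: Hhc| exact: mem0v]. Qed.
Lemma ef_h j k : br (e j) (f k) \in h.
Proof. rewrite Hef; case: eqP => _; [exact: Hhc| exact: mem0v]. Qed.

Variables (Ce Cf : {vspace L}).
Hypothesis HCe : is_closure br e es Ce.
Hypothesis HCf : is_closure br f fs Cf.

Lemma e_Ce j : e j \in Ce. Proof. by case: HCe => CX _ _; apply: CX; apply: fam_mem. Qed.
Lemma f_Cf j : f j \in Cf. Proof. by case: HCf => CX _ _; apply: CX; apply: fam_mem. Qed.
Lemma eCe j y : y \in Ce -> br (e j) y \in Ce. Proof. by case: HCe => _ Cg _; apply: Cg. Qed.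
Lemma fCf j y : y \in Cf -> br (f j) y \in Cf. Proof. by case: HCf => _ Cg _; apply: Cg. Qed.

Lemma hCe z y : z \in h -> y \in Ce -> br z y \in Ce.
Proof.
apply: (cl_h HCe).
- by move=> z' j zh; exists (xi j z'); exact: Hhe.
- by move=> z' x zh /mem_fam[j ->]; rewrite Hhe // memvZ // e_Ce.
Qed.
Lemma hCf z y : z \in h -> y \in Cf -> br z y \in Cf.
Proof.
apply: (cl_h HCf).
- by move=> z' j zh; exists (- xi j z'); rewrite Hhf // scaleNr.
- by move=> z' x zh /mem_fam[j ->]; rewrite Hhf // memvN memvZ // f_Cf.
Qed.

Lemma ehCe j x : x \in h -> br (e j) x \in Ce.
Proof. by move=> xh; rewrite brC // Hhe // memvN memvZ // e_Ce. Qed.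
Lemma fhCf j x : x \in h -> br (f j) x \in Cf.
Proof. by move=> xh; rewrite brC // Hhf // opprK memvZ // f_Cf. Qed.

Lemma fCe j y : y \in Ce -> br (f j) y \in (Ce + h)%VS.
Proof.
move: j y; apply: (cl_opp HCe hCe fe_h (addvSl _ _)).
- move=> k w /memv_addP[c cC [x xh ->]]; rewrite brDr // memvD //.
    by apply: inl_add; apply: eCe.
  by apply: inl_add; apply: ehCe.
- by move=> j' x /mem_fam[k ->]; apply: inr_add; exact: fe_h.
Qed.
Lemma eCf j y : y \in Cf -> br (e j) y \in (Cf + h)%VS.
Proof.
move: j y; apply: (cl_opp HCf hCf ef_h (addvSl _ _)).
- move=> k w /memv_addP[c cC [x xh ->]]; rewrite brDr // memvD //.
    by apply: inl_add; apply: fCf.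
  by apply: inl_add; apply: fhCf.
- by move=> j' x /mem_fam[k ->]; apply: inr_add; exact: ef_h.
Qed.

Definition V := (Cf + h + Ce)%VS.
Lemma inV1 x : x \in Cf -> x \in V. Proof. by move=> ?; apply/inl_add/inl_add. Qed.
Lemma inV2 x : x \in h -> x \in V. Proof. by move=> ?; apply/inl_add/inr_add. Qed.
Lemma inV3 x : x \in Ce -> x \in V. Proof. by move=> ?; apply/inr_add. Qed.
Lemma inV12 x : x \in (Cf + h)%VS -> x \in V. Proof. by move=> ?; apply/inl_add. Qed.
Lemma inV32 x : x \in (Ce + h)%VS -> x \in V.
Proof. by move/memv_addP=> [c cC [y yh ->]]; apply: memvD; [apply: inV3 | apply: inV2]. Qed.

Lemma eV j v : v \in V -> br (e j) v \in V.
Proof.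
move/memv_addP => [u /memv_addP[c cCf [x xh ->]] [d dCe ->]].
rewrite !(brDr Hl); apply: memvD; first apply: memvD.
- exact/inV12/eCf.
- exact/inV3/ehCe.
- exact/inV3/eCe.
Qed.
Lemma fV j v : v \in V -> br (f j) v \in V.
Proof.
move/memv_addP => [u /memv_addP[c cCf [x xh ->]] [d dCe ->]].
rewrite !(brDr Hl); apply: memvD; first apply: memvD.
- exact/inV1/fCf.
- exact/inV1/fhCf.
- exact/inV32/fCe.
Qed.
Lemma hV z v : z \in h -> v \in V -> br z v \in V.
Proof.
move=> zh; move/memv_addP => [u /memv_addP[c cCf [x xh ->]] [d dCe ->]].
rewrite !(brDr Hl); apply: memvD; first apply: memvD.
- exact/inV1/hCf.
- by rewrite Hhh // mem0v.
- exact/inV3/hCe.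
Qed.
Lemma VV u v : u \in V -> v \in V -> br u v \in V.
Proof.
move/memv_addP => [u' /memv_addP[c cCf [x xh ->]] [d dCe ->]] vV.
rewrite !(brDl Hl); apply: memvD; first apply: memvD.
- apply: (cl_norm HCf _ _ cCf vV).
    by move=> x' v' /mem_fam[j ->]; apply: fV.
  exact: fV.
- exact: hV.
- apply: (cl_norm HCe _ _ dCe vV).
    by move=> x' v' /mem_fam[j ->]; apply: eV.
  exact: eV.
Qed.

Lemma V_full : V = fullv.
Proof.
apply: Hgen.
- by move=> u v; apply: VV.
- by apply/subvP => x; apply: inV2.
- by move=> j; split; [apply/inV3/e_Ce | apply/inV1/f_Cf].
Qed.

Lemma brG (P : pred deg) b x y : (forall a, P a -> P (b + a)) -> x \in gr b -> y \in G P ->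
  br x y \in G P.
Proof.
move=> PP xb; apply: (sumF_ind (F := gr) (P := P) (Q := fun u => br x u \in G P)).
- by rewrite br0r // mem0v.
- by move=> u v Hu Hv; rewrite brDr // memvD.
- by move=> a u Pa ua; apply: (mem_G HSu HS0 (PP a Pa)); apply: HSb.
Qed.

Lemma memG (P : pred deg) a u : P a -> u \in gr a -> u \in G P.
Proof. exact: (mem_G HSu HS0). Qed.

Lemma Cf_G : (Cf <= G (@negd theta))%VS.
Proof.
apply: (cl_sub HCf).
- by move=> x /mem_fam[j ->]; apply: (memG (negd_alpha j)).
- move=> j w; apply: brG => //; first exact: negd_add.
Qed.

Variable i : 'I_theta.
Definition Pos' : pred deg := [pred d | posd d && (d != alpha i)].
Definition ens := [seq e j | j <- enum 'I_theta & j != i].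
Variable Ei : {vspace L}.
Hypothesis HEi : is_closure br e ens Ei.

Lemma e_Ei j : j != i -> e j \in Ei.
Proof.
by move=> ji; case: HEi => CX _ _; apply: CX; rewrite (map_f e) // mem_filter ji mem_enum.
Qed.
Lemma eEi j y : y \in Ei -> br (e j) y \in Ei. Proof. by case: HEi => _ Cg _; apply: Cg. Qed.

Lemma Ce_sub : (Ce <= Ei + <[e i]>)%VS.
Proof.
apply: (cl_sub HCe).
- move=> x /mem_fam[j ->]; have [->|ji] := eqVneq j i.
    by apply: inr_add; apply: memv_line.
  by apply: inl_add; apply: e_Ei.
- move=> j w /memv_addP[u uE [v /vlineP[c ->] ->]]; rewrite brDr // brZr //.
  apply: memvD; first by apply: inl_add; apply: eEi.
  apply: inl_add; apply: memvZ; have [->|ji] := eqVneq j i; first by rewrite brxx // mem0v.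
  by rewrite brC // memvN; apply: eEi; apply: e_Ei.
Qed.

Lemma Ei_G : (Ei <= G Pos')%VS.
Proof.
apply: (cl_sub HEi).
- move=> x /mapP[j]; rewrite mem_filter => /andP[ji _] ->.
  by apply: (memG (a := alpha j)) => //; apply/andP; split; [exact: posd_alpha | exact: pos'_alpha].
- move=> j w; apply: brG => // a /andP[pa na]; apply/andP; split; [exact: posd_add | exact: pos'_add].
Qed.

Lemma Ei_U (U : {vspace L}) : subalgebra br U -> (forall u, u \in U -> br (e i) u \in U) ->
  (forall k, k != i -> e k \in U) -> (Ei <= U)%VS.
Proof.
move=> sU eU kU; apply: (cl_sub HEi).
- by move=> x /mapP[j]; rewrite mem_filter => /andP[ji _] ->; apply: kU.
- move=> j w wU; have [->|ji] := eqVneq j i; first exact: eU.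
  by apply: sU => //; apply: kU.
Qed.

Lemma main_pos (U : {vspace L}) : subalgebra br U -> (forall u, u \in U -> br (e i) u \in U) ->
  (forall k, k != i -> e k \in U) ->
  forall g, posd g -> g != alpha i -> (gr g <= U)%VS.
Proof.
move=> sU eU kU g pg ng; apply/subvP => y yg.
have : y \in V by rewrite V_full memvf.
move/memv_addP => [u' /memv_addP[c cCf [x xh Eu']] [d dCe Ey]].
have := subvP Ce_sub d dCe => /memv_addP[u uE [v /vlineP[t Ev] Ed]].
have key : y - u = 0.
  apply: (G_sep HSu HS0 HSd (P := Pos') (Q := predC Pos')).
  - by move=> a Pa /negP; apply.
  - apply: memvB; last exact: (subvP Ei_G).
    by apply: (memG (a := g)) => //; apply/andP; split.
  - have -> : y - u = c + x + t *: e i.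
      by rewrite Ey Ed Eu' Ev [u + _]addrC addrA addrK.
    apply: memvD; first apply: memvD.
    + apply: (subvP (G_sub HSu HS0 (P := @negd theta) (Q := predC Pos') _)) (subvP Cf_G c cCf).
      by move=> a na /=; apply/negP => /andP[pa _]; apply: (posd_negd pa na).
    + apply: (memG (a := 0)); first by apply/negP => /andP[]; rewrite (negPf (posd0 _)).
      exact: (subvP Hh0).
    + apply: memvZ; apply: (memG (a := alpha i)); first by apply/negP => /andP[_]; rewrite eqxx.
      exact: Hegr.
rewrite (subr0_eq key); exact: (subvP (Ei_U sU eU kU)).
Qed.

Lemma fe_ne j l : j != l -> br (f j) (e l) = 0.
Proof. by move=> jl; rewrite brC // Hef eq_sym (negPf jl) oppr0. Qed.
Lemma fe_eq j : br (f j) (e j) = - hc j.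
Proof. by rewrite brC // Hef eqxx. Qed.

Variable p : nat.
Hypothesis Hp2 : (1 < p)%N.
Hypothesis Hp0 : p%:R = 0 :> K.
Hypothesis HAii : A i i = 0 \/ A i i = 2.

Section KK.
Variable k : 'I_theta.
Hypothesis ki : k != i.
Definition w m := iter m (br (e i)) (e k).
Lemma wS m : w m.+1 = br (e i) (w m). Proof. by []. Qed.

Lemma w_gr m : w m \in gr (alpha k + alpha i *+ m).
Proof.
elim: m => [|m IH]; first by rewrite mulr0n addr0 Hegr.
rewrite wS; have := HSb (Hegr i) IH; by rewrite mulrS addrCA.
Qed.

Lemma w_h z m : z \in h -> br z (w m) = (xi k z + m%:R * xi i z) *: w m.
Proof.
move=> zh; elim: m => [|m IH]; first by rewrite mul0r addr0 Hhe.
rewrite wS jacobi // Hhe // brZl // IH brZr // -scalerDl; congr (_ *: _).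
by rewrite mulrS mulrDl mul1r addrCA.
Qed.

Lemma w_fj j m : j != i -> j != k -> br (f j) (w m) = 0.
Proof.
move=> ji jk; elim: m => [|m IH]; first by rewrite fe_ne.
by rewrite wS jacobi // IH br0r // addr0 fe_ne // br0l.
Qed.

Lemma w_fk m : br (f k) (w m.+2) = 0.
Proof.
have h1 : br (f k) (w 1) = A k i *: e i.
  rewrite wS jacobi // fe_ne // br0l // add0r fe_eq brNr // brC // opprK.
  by rewrite Hhe // HxiA.
elim: m => [|m IH]; first by rewrite wS jacobi // fe_ne // br0l // add0r h1 brZr // brxx // scaler0.
by rewrite wS jacobi // fe_ne // br0l // add0r IH br0r.
Qed.

Lemma w_fi m : br (f i) (w m) = - (m%:R * A i k + 'C(m, 2)%:R * A i i) *: w m.-1.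
Proof.
elim: m => [|m IH]; first by rewrite /= fe_ne 1?eq_sym // !mul0r addr0 oppr0 scale0r.
rewrite wS jacobi // fe_eq brNl // w_h // IH brZr // !HxiA.
case: m IH => [|m] IH.
  by rewrite /= !mul0r !addr0 oppr0 scale0r addr0 mul1r scaleNr.
rewrite [m.+1.-1]/= [m.+2.-1]/= -wS -scaleNr -scalerDl; congr (_ *: _).
rewrite (binS m.+1 1) bin1 natrD (mulrS 1 m.+1).
set a := m.+1%:R; set b := 'C(m.+1, 2)%:R; ring.
Qed.

Lemma bin2_mul2 n : ('C(n, 2) * 2 = n * n.-1)%N.
Proof.
elim: n => [//|n IH]; rewrite binS bin1 mulnDl IH.
by case: n {IH} => [//|n] /=; nia.
Qed.


Lemma wp_f j : br (f j) (w p) = 0.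
Proof.
have [->|ji] := eqVneq j i.
  rewrite w_fi Hp0 mul0r add0r; case: HAii => ->; first by rewrite mulr0 oppr0 scale0r.
  have -> : 'C(p, 2)%:R * (2 : K) = ('C(p, 2) * 2)%:R by rewrite natrM.
  by rewrite bin2_mul2 natrM Hp0 mul0r oppr0 scale0r.
have [->|jk] := eqVneq j k; last exact: w_fj.
by case: p Hp2 => [|[|m]] // _; apply: w_fk.
Qed.

Lemma memIG (Ix : {vspace L}) a u : u \in Ix -> u \in gr a ->
  u \in (\sum_(b <- S) (Ix :&: gr b))%VS.
Proof.
move=> uI ua; have [aS|naS] := boolP (a \in S).
  apply: (subvP (sumF_sup HSu (fun b => Ix :&: gr b)%VS (P := xpredT) aS isT)).
  by rewrite memv_cap uI.
by move: ua; rewrite HS0 // memv0 => /eqP ->; rewrite mem0v.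
Qed.

Lemma wp0 : w p = 0.
Proof.
have [Ix HIx] := closure_ex Hl e [:: w p].
have wI : w p \in Ix by case: HIx => CX _ _; apply: CX; rewrite mem_seq1.
have eI : forall j y, y \in Ix -> br (e j) y \in Ix by case: HIx.
have hI : forall z y, z \in h -> y \in Ix -> br z y \in Ix.
  apply: (cl_h HIx).
  - by move=> z' j zh; exists (xi j z'); exact: Hhe.
  - by move=> z' x zh; rewrite mem_seq1 => /eqP ->; rewrite w_h // memvZ.
have fI : forall j y, y \in Ix -> br (f j) y \in Ix.
  apply: (cl_opp HIx hI fe_h (subvv Ix) eI).
  by move=> j x; rewrite mem_seq1 => /eqP ->; rewrite wp_f mem0v.
have ideal : lie_ideal br Ix.
  move=> u v _ vI; have : u \in V by rewrite V_full memvf.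
  move/memv_addP => [u' /memv_addP[c cCf [x xh ->]] [d dCe ->]].
  rewrite !(brDl Hl); apply: memvD; first apply: memvD.
  - apply: (cl_norm HCf _ _ cCf vI); last exact: fI.
    by move=> x' v' /mem_fam[j ->]; apply: fI.
  - exact: hI.
  - apply: (cl_norm HCe _ _ dCe vI); last exact: eI.
    by move=> x' v' /mem_fam[j ->]; apply: eI.
have graded : graded_subspace gr Ix.
  exists S; apply: (cl_sub HIx).
  - by move=> x; rewrite mem_seq1 => /eqP ->; apply: (memIG wI (w_gr p)).
  - move=> j y; apply: (sumF_ind (F := (fun b => Ix :&: gr b)%VS) (S' := S) (P := xpredT)
      (Q := fun u => br (e j) u \in (\sum_(b <- S) (Ix :&: gr b))%VS)).
    + by rewrite br0r // mem0v.
    + by move=> u v Hu Hv; rewrite brDr // memvD.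
    + move=> a u _ /memv_capP[uI ua]; apply: (memIG (a := alpha j + a)); first exact: eI.
      exact: HSb.
have IG : (Ix <= G (@posd theta))%VS.
  apply: (cl_sub HIx).
  - by move=> x; rewrite mem_seq1 => /eqP ->; apply: (memG (posd_km ki p)); apply: w_gr.
  - by move=> j y; apply: brG => // a; apply: posd_add.
have capI : (Ix :&: h = 0)%VS.
  apply/eqP; rewrite -subv0; apply/subvP => y /memv_capP[yI yh]; rewrite memv0; apply/eqP.
  apply: (G_sep HSu HS0 HSd (P := @posd theta) (Q := pred1 0)).
  - by move=> a pa /eqP ea; move: pa; rewrite ea (negPf (posd0 _)).
  - exact: (subvP IG).
  - by apply: (memG (P := pred1 0) (a := 0)); [exact: eqxx | exact: (subvP Hh0 y yh)].
by move: wI; rewrite (Hquot ideal graded capI) memv0 => /eqP.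
Qed.

Lemma gr_end l : (0 < l)%N -> w l = 0 -> gr (alpha k + alpha i *+ l) = 0%VS.
Proof.
move=> l0 wl.
pose Wk := <<[seq w m | m <- iota 0 l]>>%VS.
have wWk m : (m < l)%N -> w m \in Wk.
  by move=> ml; apply: memv_span; apply: map_f; rewrite mem_iota.
pose T := (<[e i]> + Wk + G (Qd k i))%VS.
have WkT : (Wk <= T)%VS by apply: subv_trans (addvSr _ _) (addvSl _ _).
have wS_in m : (m < l)%N -> w m.+1 \in T.
  move=> ml; have [ml'|lm] := ltnP m.+1 l.
    by apply: (subvP WkT); apply: wWk.
  have -> : m.+1 = l by apply/eqP; rewrite eqn_leq lm ml.
  by rewrite wl mem0v.
have inT1 x : x \in <[e i]>%VS -> x \in T by move=> ?; apply/inl_add/inl_add.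
have inT3 x : x \in G (Qd k i) -> x \in T by move=> ?; apply/inr_add.
have ik : i != k by rewrite eq_sym.
have CeT : (Ce <= T)%VS.
  apply: (cl_sub HCe).
  - move=> x /mem_fam[j ->]; have [->|ji] := eqVneq j i; first by apply: inT1; apply: memv_line.
    have [->|jk] := eqVneq j k; first by apply: (subvP WkT); apply: (wWk 0%N).
    by apply: inT3; apply: (memG (Qd_alpha ji jk)).
  - move=> j y /memv_addP[ab /memv_addP[a /vlineP[c ->] [b bW ->]] [q qQ ->]].
    rewrite !(brDr Hl) (brZr Hl); apply: memvD; first apply: memvD.
    + apply: memvZ; have [->|ji] := eqVneq j i; first by rewrite brxx // mem0v.
      have [->|jk] := eqVneq j k; first by rewrite brC // memvN; apply: (wS_in 0%N).
      by apply: inT3; apply: (memG (Qd_ji ji jk)); apply: HSb.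
    + move: b bW; apply: (span_ind (P := fun b => br (e j) b \in T)).
      * by rewrite br0r // mem0v.
      * by move=> a' x' y' Hx Hy; rewrite brLr // memvD // memvZ.
      * move=> x /mapP[m]; rewrite mem_iota add0n => /andP[_ ml] ->.
        have [->|ji] := eqVneq j i; first exact: wS_in.
        by apply: inT3; apply: (memG (Qd_jkm ki m ji)); apply: HSb => //; apply: w_gr.
    + by apply: inT3; apply: brG => // a'; apply: (Qd_add ki).
pose R : pred deg := [pred d | [|| negd d, d == 0, d == alpha i,
    d \in [seq alpha k + alpha i *+ m | m <- iota 0 l] | Qd k i d]].
have TR : (T <= G R)%VS.
  rewrite !subv_add -andbA; apply/and3P; split.
  - apply/subvP => x /vlineP[c ->]; apply: memvZ; apply: (memG (a := alpha i)).
      by rewrite /R inE eqxx !orbT.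
    exact: Hegr.
  - apply/span_subvP => x /mapP[m mI ->]; apply: (memG (a := alpha k + alpha i *+ m)).
      by rewrite /R inE (map_f (fun m => alpha k + alpha i *+ m) mI) !orbT.
    exact: w_gr.
  - by apply: G_sub => // a' Qa; rewrite /R inE Qa !orbT.
have nR : ~~ R (alpha k + alpha i *+ l).
  have pk := posd_km ki l.
  rewrite /R inE negb_or; apply/andP; split.
    by apply/negP => nk; apply: (posd_negd pk nk).
  rewrite negb_or; apply/andP; split.
    by apply/negP => /eqP e0; move: pk; rewrite e0 (negPf (posd0 _)).
  rewrite negb_or; apply/andP; split.
    apply/negP => /eqP/(congr1 (fun m : deg => m 0 k)).
    by rewrite kmE alphaE eqxx (negPf ki) /= mul0rn addr0.
  rewrite negb_or; apply/andP; split.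
    apply/negP => /mapP[m]; rewrite mem_iota add0n => /andP[_ ml].
    move/(congr1 (fun m : deg => m 0 i)); rewrite !kmE eqxx (negPf ik) /= add0r.
    rewrite add0r => /eqP; rewrite eqr_nat => /eqP lm.
    by rewrite lm ltnn in ml.
  suff Kg : isK k i (alpha k + alpha i *+ l) by rewrite /Qd Kg !andbF.
  apply/andP; split.
    by rewrite kmE eqxx (negPf ki) mul0rn addr0.
  apply/forallP => t; apply/implyP => /andP[tk ti].
  by rewrite kmE (negPf tk) (negPf ti) mul0rn addr0.
apply/eqP; rewrite -subv0; apply/subvP => y yg; rewrite memv0; apply/eqP.
apply: (G_sep HSu HS0 HSd (P := R) (Q := pred1 (alpha k + alpha i *+ l))).
- by move=> a Ra /eqP ea; move: Ra; rewrite ea (negPf nR).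
- have : y \in V by rewrite V_full memvf.
  move/memv_addP => [u' /memv_addP[c cCf [x xh ->]] [d dCe ->]].
  apply: memvD; first apply: memvD.
  + apply: (subvP (G_sub HSu HS0 (P := @negd theta) (Q := R) _)) (subvP Cf_G c cCf).
    by move=> a na; rewrite /R inE na.
  + apply: (memG (a := 0)); first by rewrite /R inE eqxx orbT.
    exact: (subvP Hh0).
  + exact: (subvP TR) (subvP CeT d dCe).
- by apply: (memG (a := alpha k + alpha i *+ l)) => //=.
Qed.
Lemma eK_U (U : {vspace L}) :
  (forall l, (1 <= l <= p)%N -> string_gen gr i l (alpha k) ->
     (Mstring gr i l (alpha k) <= U)%VS) -> e k \in U.
Proof.
move=> HM; have ik : i != k by rewrite eq_sym.
have ek0 : e k != 0.
  apply/eqP => ek; have := Hef k k; rewrite eqxx ek br0l // => /esym hk0.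
  have H1 : \sum_t ((t == k)%:R : K) *: hc t = 0.
    rewrite (bigD1 k) //= eqxx scale1r hk0 add0r big1 // => t /negPf ->.
    by rewrite scale0r.
  by have := Hind H1 k; rewrite eqxx => /eqP; rewrite oner_eq0.
have ex : exists m, w m == 0 by exists p; rewrite wp0.
case: (ex_minnP ex) => l /eqP wl lmin.
have l0 : (0 < l)%N.
  by case: l wl lmin => // wl0 _; move: ek0; rewrite -[e k]/(w 0) wl0 eqxx.
have lp : (l <= p)%N by apply: lmin; rewrite wp0.
have Hsub : (Mstring gr i l (alpha k) <= U)%VS.
  apply: HM; first by rewrite l0 lp.
  split.
  - exact: pos'_alpha ki.
  - move=> m ml; have /andP[/forallP H0 nz] := posd_km ki m; split => //.
    apply/negP => /eqP g0; have := w_gr m; rewrite g0 memv0 => wm0.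
    by have := lmin m wm0; rewrite leqNgt ml.
  - by case=> H _ _; have := H i; rewrite subE !alphaE eqxx (negPf ik).
  - by case=> _ _ /negP; apply; rewrite gr_end.
apply: (subvP Hsub); apply: (subvP (sumv_sup (Ordinal l0) _ _)) => //.
by rewrite /= mulr0n addr0 Hegr.
Qed.
End KK.

Lemma final (j : nat) (beta : deg) : string_gen gr i j beta ->
  in_generated_subalgebra br gr p i e (Mstring gr i j beta).
Proof.
move=> [bi Hroot _ _] U [_ sU eU] HM.
have kU : forall k, k != i -> e k \in U.
  by move=> k ki; apply: (eK_U ki) => l Hl1 Hs; apply: HM.
apply/subv_sumP => m _; apply: (main_pos sU eU kU).
  have [H0 nz _] := Hroot m (ltn_ord m).
  by apply/andP; split => //; apply/forallP.
have [m0|mpos] := posnP m; first by rewrite m0 mulr0n addr0.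
have [H0 bnz _] := Hroot 0%N (leq_ltn_trans (leq0n _) (ltn_ord m)).
move: H0 bnz; rewrite mulr0n addr0 => H0 bnz.
apply/negP => /eqP E; move/negP: bnz; apply; apply/eqP/eq_entries => t.
have := congr1 (fun M : deg => M 0 t) E; rewrite addE muln_E !alphaE mxE.
have := H0 t; case: eqP => _ /=; rewrite ?mulr1n ?mul0rn natz; lia.
Qed.

End Main.

End Aux.
Import Aux.

Theorem proposition4p8 (K : closedFieldType) (p : nat) (theta : nat)
  (A : 'M[K]_theta)
  (L : vectType K) (br : L -> L -> L) (h : {vspace L})
  (e f hc : 'I_theta -> L) (xi : 'I_theta -> L -> K)
  (gr : 'rV[int]_theta -> {vspace L}) (i : 'I_theta)
  (beta : 'rV[int]_theta) (j : nat) :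
  prime p -> p \in [pchar K] ->
  (forall k : 'I_theta, A k k = 0 \/ A k k = 2) ->
  (forall k l : 'I_theta, k != l -> (A k l == 0) = (A l k == 0)) ->
  is_contragredient br A h e f hc xi gr ->
  (1 <= j <= p)%N -> string_gen gr i j beta ->
  in_generated_subalgebra br gr p i e (Mstring gr i j beta).
Proof.
move=> pp pch HAkk _ Hc _ Hs.
case: Hc => Hl [_ [Hhc HxiA] _ _ Hind] [Hhh Hhe Hhf Hef]
  [Hgen [[S [HSu HS0 HSd _ HSb]] Hh0 Hegr Hfgr]] Hquot.
have [Ce HCe] := closure_ex Hl e (es e).
have [Cf HCf] := closure_ex Hl f (fs f).
have [Ei HEi] := closure_ex Hl e (ens e i).
exact: (final Hl Hhc HxiA Hind Hhh Hhe Hhf Hef Hgen HSu HS0 HSd HSb Hh0 Hegr Hfgr Hquot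
  HCe HCf HEi (prime_gt1 pp) (pcharf0 pch) (HAkk i) Hs).
Qed.
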